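(* The function $\check J$ is continuous on $\mathcal M_T$.
   Context: Fix integers $n,m,T\ge 1$, a scalar $\varepsilon>0$, matrices $A_k\in\mathbb R^{n\times n}$, $B_k\in\mathbb R^{n\times m}$ ($k=0,\dots,T-1$), and symmetric positive definite matrices $R_k\in\mathbb R^{m\times m}$, $\Sigma_{w_k}\in\mathbb R^{n\times n}$ ($k=0,\dots,T-1$), $F,\Sigma_{x_{\mathrm{ini}}}\in\mathbb R^{n\times n}$. Let $\mathcal M_T=(\mathbb S^m_{\succeq 0})^T$ with $\mathbb S^m_{\succeq0}$ the symmetric PSD $m\times m$ matrices; $\Sigma^{1/2}$ the PSD square root, $|\cdot|$ the determinant. For $(\Sigma_{\rho_0},\dots,\Sigma_{\rho_{T-1}})\in\mathcal M_T$ define backwards $\Pi_T=F$, $C_k=(R_k+B_k^\top\Pi_{k+1}B_k)/\varepsilon$, $\Pi_k=A_k^\top\Pi_{k+1}A_k-\frac1\varepsilon A_k^\top\Pi_{k+1}B_k\Sigma_{\rho_k}^{1/2}(I+\Sigma_{\rho_k}^{1/2}C_k\Sigma_{\rho_k}^{1/2})^{-1}\Sigma_{\rho_k}^{1/2}B_k^\top\Pi_{k+1}A_k$, $\Sigma_{Q_k}=\varepsilon(R_k+B_k^\top\Pi_{k+1}B_k)^{-1}$, and $\check J(\Sigma_{\rho_0},\dots,\Sigma_{\rho_{T-1}})=\frac12\Big[\mathrm{Tr}(\Pi_0\Sigma_{x_{\mathrm{ini}}})+\sum_{k=0}^{T-1}\Big(\varepsilon\log\frac{|\Sigma_{\rho_k}+\Sigma_{Q_k}|}{|\Sigma_{Q_k}|}+\mathrm{Tr}(\Pi_{k+1}\Sigma_{w_k})\Big)\Big]$.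 *)

(* Defs.v *)
From HB Require Import structures.
From mathcomp Require Import all_boot all_order all_algebra.
From mathcomp Require Import all_classical all_reals all_analysis.
Set Implicit Arguments. Unset Strict Implicit. Unset Printing Implicit Defensive.
Import Order.TTheory GRing.Theory Num.Theory.
Import numFieldNormedType.Exports.
Local Open Scope classical_set_scope.
Local Open Scope ring_scope.

Section Defs.
Variable R : realType.

Definition psd (p : nat) (S : 'M[R]_p) : Prop :=
  S^T = S /\ forall v : 'cV[R]_p, 0 <= (v^T *m S *m v) 0 0.
Definition pd (p : nat) (S : 'M[R]_p) : Prop :=
  S^T = S /\ forall v : 'cV[R]_p, v != 0 -> 0 < (v^T *m S *m v) 0 0.

Definition sqrtm (p : nat) (S : 'M[R]_p) : 'M[R]_p :=
  xget 0 [set X | psd X /\ X *m X = S].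

Definition MT (T m : nat) : set {ptws 'I_T -> 'M[R]_m} :=
  [set S | forall k : 'I_T, psd (S k)].

Definition at_nat (T : nat) (X : Type) (f : 'I_T -> X) (d : X) (k : nat) : X :=
  oapp f d (insub k).

Section Jcheck.
Variables (n m T : nat) (eps : R).
Variables (A : 'I_T -> 'M[R]_n) (B : 'I_T -> 'M[R]_(n, m))
          (Rk : 'I_T -> 'M[R]_m) (Sw : 'I_T -> 'M[R]_n) (F Sx : 'M[R]_n).
Variable Srho : 'I_T -> 'M[R]_m.

Let A_ := at_nat A 0.
Let B_ := at_nat B 0.
Let R_ := at_nat Rk 0.
Let W_ := at_nat Sw 0.
Let Sr_ := at_nat Srho 0.

(* C_k as a function of Pi_{k+1} *)
Definition Cmat (k : nat) (P : 'M[R]_n) : 'M[R]_m :=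
  eps^-1 *: (R_ k + (B_ k)^T *m P *m B_ k).

(* Pi_k from Pi_{k+1} = P *)
Definition Pi_step (k : nat) (P : 'M[R]_n) : 'M[R]_n :=
  let S := sqrtm (Sr_ k) in
  (A_ k)^T *m P *m A_ k
  - eps^-1 *: ((A_ k)^T *m P *m B_ k *m S
               *m invmx (1%:M + S *m Cmat k P *m S)
               *m S *m (B_ k)^T *m P *m A_ k).

Fixpoint Pi_rev (j : nat) : 'M[R]_n :=
  match j with
  | 0 => F
  | j'.+1 => Pi_step (T - j'.+1) (Pi_rev j')
  end.

Definition Pi (k : nat) : 'M[R]_n := Pi_rev (T - k).

Definition SigmaQ (k : nat) : 'M[R]_m :=
  eps *: invmx (R_ k + (B_ k)^T *m Pi k.+1 *m B_ k).

Definition Jcheck_val : R :=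
  2^-1 * (\tr (Pi 0 *m Sx)
          + \sum_(k < T) (eps * ln (\det (Sr_ k + SigmaQ k) / \det (SigmaQ k))
                          + \tr (Pi k.+1 *m W_ k))).
End Jcheck.

Definition Jcheck (n m T : nat) (eps : R)
  (A : 'I_T -> 'M[R]_n) (B : 'I_T -> 'M[R]_(n, m))
  (Rk : 'I_T -> 'M[R]_m) (Sw : 'I_T -> 'M[R]_n) (F Sx : 'M[R]_n)
  (Srho : {ptws 'I_T -> 'M[R]_m}) : R :=
  Jcheck_val eps A B Rk Sw F Sx Srho.

End Defs.

(* Main.v *)
Require Import Defs.
From HB Require Import structures.
From mathcomp Require Import all_boot all_order all_algebra.
From mathcomp Require Import all_classical all_reals all_analysis.
From mathcomp Require Import complex.
From mathcomp Require Import fingroup perm.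
Set Implicit Arguments. Unset Strict Implicit. Unset Printing Implicit Defensive.
Import Order.TTheory GRing.Theory Num.Theory.
Local Open Scope ring_scope.

Section RD.
Variable R : rcfType.
Local Notation C := (R[i]).
Local Notation toC := (real_complex R).

Lemma real_is_C (x : C) : x \is Num.real -> x = (complex.Re x)%:C%C.
Proof.
case: x => a b; rewrite realE => /orP [] h.
  by move: h; rewrite lecE => /andP [/eqP /= -> _].
by move: h; rewrite lecE => /andP [/eqP /= <- _].
Qed.

Lemma realdiag p (S : 'M[R]_p.+1) : S^T = S ->
  exists Q : 'M[R]_p.+1, exists d : 'rV[R]_p.+1,
    Q \in unitmx /\ Q *m S = diag_mx d *m Q.
Proof.
move=> Ssym.
pose Sc := map_mx toC S.
have Screal : Sc \is a realmx.
  apply/mxOverP => i j; rewrite mxE.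
  by case: (lerP 0 (S i j)) => h; rewrite realE ?lecR ?h // (ltW h) orbT.
have Scsym : Sc \is symmetricmx.
  apply/is_hermitianmxP; rewrite expr0 scale1r.
  Fail Fail idtac. rewrite map_mx_id //= /Sc map_trmx Ssym //.
have Scherm := realsym_hermsym Scsym Screal.
have /orthomx_spectralP Se := hermitian_normalmx Scherm.
have Pu := spectral_unit Sc.
have dreal := hermitian_spectral_diag_real Scherm.
have sim : similar (spectralmx Sc) Sc (diag_mx (spectral_diag Sc)).
  apply/similarP => //.
  by rewrite {2}Se !mulmxA mulmxV // mul1mx.
have dmr : diag_mx (spectral_diag Sc) \is a realmx.
  apply/mxOverP => i j; rewrite mxE; case: (i == j) => /=; last by rewrite mulr0n real0.
  by rewrite mulr1n; move/mxOverP: dreal; apply.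
have [Q' /andP [Q'r Q'u] simQ] := real_similar
   (@ex_intro2 _ (fun P => P \in unitmx) (fun P => similar P Sc _) _ Pu sim) Screal dmr.
pose Q := map_mx (@complex.Re R) Q'.
pose d := map_mx (@complex.Re R) (spectral_diag Sc).
have Q'E : Q' = map_mx toC Q.
  by apply/matrixP => i j; rewrite !mxE -real_is_C //; move/mxOverP: Q'r; apply.
have dE : spectral_diag Sc = map_mx toC d.
  by apply/matrixP => i j; rewrite !mxE -real_is_C //; move/mxOverP: dreal; apply.
exists Q, d; split.
  by move: Q'u; rewrite Q'E map_unitmx.
move/(similarP Q'u): simQ; rewrite Q'E dE -map_diag_mx -!map_mxM.
exact: map_mx_inj.
Qed.
End RD.

Section Sq.
Variable R : realType.

Lemma tmm_ge0 p (v : 'cV[R]_p) : 0 <= (v^T *m v) 0 0.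
Proof.
rewrite !mxE; apply: sumr_ge0 => i _; rewrite mxE -expr2; exact: sqr_ge0.
Qed.

Lemma tmm_eq0 p (v : 'cV[R]_p) : (v^T *m v) 0 0 = 0 -> v = 0.
Proof.
rewrite !mxE => /eqP; rewrite psumr_eq0; last by move=> i _; rewrite mxE -expr2 sqr_ge0.
move=> /allP h; apply/matrixP => i j; rewrite ord1 !mxE.
have := h i (mem_index_enum i); rewrite /= mxE -expr2 sqrf_eq0 => /eqP -> //.
Qed.

Lemma interp (s : seq R) (f : R -> R) :
  exists r : {poly R}, forall z, z \in s -> r.[z] = f z.
Proof.
elim: s => [|z s [r hr]]; first by exists 0.
case: (boolP (z \in s)) => zs.
  by exists r => y; rewrite inE => /orP [/eqP ->|]; auto.
pose q := \prod_(y <- s) ('X - y%:P).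
have qz : q.[z] != 0.
  rewrite horner_prod prodf_seq_neq0; apply/allP => y ys /=.
  by rewrite hornerXsubC subr_eq0; apply: contraNneq zs => ->.
have qy y : y \in s -> q.[y] = 0.
  move=> ys; rewrite horner_prod (big_rem y ys) /= hornerXsubC subrr mul0r //.
exists (r + ((f z - r.[z]) / q.[z]) *: q) => y; rewrite inE => /orP [/eqP ->|ys].
  by rewrite hornerD hornerZ divfK // addrC subrK.
by rewrite hornerD hornerZ (qy y ys) mulr0 addr0 hr.
Qed.

Lemma trmx_horner p (A : 'M[R]_p.+1) (r : {poly R}) :
  (horner_mx A r)^T = horner_mx A^T r.
Proof.
elim/poly_ind: r => [|r c ih]; first by rewrite !rmorph0 trmx0.
rewrite !rmorphD !rmorphM /= !horner_mx_X !horner_mx_C linearD /= tr_scalar_mx.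
rewrite trmx_mul ih; congr (_ + _).
exact: (comm_mx_horner r (erefl (A^T *m A^T))).
Qed.

Lemma psd_sqrt_ex p (S : 'M[R]_p.+1) : psd S -> exists X, psd X /\ X *m X = S.
Proof.
case=> Ssym Spsd.
have [Q [d [Qu QS]]] := realdiag Ssym.
have d_ge0 : forall i, 0 <= d 0 i.
  move=> i; pose u := row i Q.
  have uS : u *m S = d 0 i *: u.
    by rewrite /u -row_mul QS row_mul row_diag_mx -scalemxAl -rowE.
  have un0 : u != 0.
    apply/negP => /eqP u0.
    have : row i (Q *m invmx Q) = 0 by rewrite row_mul -/u u0 mul0mx.
    rewrite mulmxV // => /matrixP /(_ 0 i); rewrite !mxE !eqxx /= => /eqP.
    by rewrite oner_eq0.
  have hpos : 0 < (u *m u^T) 0 0.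
    rewrite lt_def; apply/andP; split; last by have := tmm_ge0 u^T; rewrite trmxK.
    apply/negP => /eqP h; move: un0; rewrite -[u]trmxK.
    by rewrite (tmm_eq0 (v := u^T)) ?trmx0 ?eqxx // trmxK.
  have := Spsd u^T; rewrite trmxK uS -scalemxAl mxE.
  by rewrite pmulr_lge0.
have [r hr] := interp [seq d 0 i | i <- enum 'I_p.+1] (fun x => Num.sqrt (Num.sqrt x)).
pose Y := horner_mx S r.
have Ysym : Y^T = Y by rewrite /Y trmx_horner Ssym.
exists (Y *m Y); split; first split.
- by rewrite trmx_mul Ysym.
- move=> v; rewrite mulmxA -{1}Ysym -trmx_mul -mulmxA; exact: tmm_ge0.
have SE : S = invmx Q *m diag_mx d *m Q by rewrite -mulmxA -QS mulKmx.
have -> : Y *m Y *m (Y *m Y) = horner_mx S (r ^+ 4).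
  by rewrite rmorphXn /= -/Y !exprS expr0 mulr1 -!mulmxA.
rewrite [in RHS]SE {1}SE horner_mx_uconjC // horner_mx_diag; congr (_ *m _ *m _).
apply/matrixP => i j; rewrite !mxE; case: (i == j) => //=; rewrite !mulr1n.
rewrite horner_exp hr; last first.
  by apply: map_f; rewrite mem_enum.
rewrite -[4%N]/(2 * 2)%N exprM sqr_sqrtr ?sqrtr_ge0 // sqr_sqrtr //.
Qed.
End Sq.

Section Alg.
Variable R : realType.

Lemma tr11 (a : 'M[R]_1) : a^T = a.
Proof. by apply/matrixP => i j; rewrite !ord1 mxE. Qed.

Lemma mtm_ge0 p (u : 'rV[R]_p) : 0 <= (u *m u^T) 0 0.
Proof. by have := tmm_ge0 u^T; rewrite trmxK. Qed.

Lemma mtm_eq0 p (u : 'rV[R]_p) : (u *m u^T) 0 0 = 0 -> u = 0.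
Proof.
by move=> h; rewrite -[u]trmxK (tmm_eq0 (v := u^T)) ?trmx0 // trmxK.
Qed.

Lemma psd_row p (S : 'M[R]_p) : psd S -> forall u : 'rV_p, 0 <= (u *m S *m u^T) 0 0.
Proof. by case=> _ h u; have := h u^T; rewrite trmxK. Qed.

Lemma psd0 p : psd (0 : 'M[R]_p).
Proof. by split; [rewrite trmx0 | move=> v; rewrite mulmx0 mul0mx mxE]. Qed.

Lemma pd_psd p (S : 'M[R]_p) : pd S -> psd S.
Proof.
case=> Ss h; split => // v; case: (eqVneq v 0) => [->|/h /ltW //].
by rewrite mulmx0 mxE.
Qed.

Lemma psd_congr p q (Y : 'M[R]_p) (X : 'M[R]_(p, q)) : psd Y -> psd (X^T *m Y *m X).
Proof.
case=> Ys h; split; first by rewrite !trmx_mul trmxK Ys mulmxA.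
by move=> v; have := h (X *m v); rewrite trmx_mul !mulmxA.
Qed.

Lemma psdD p (Y Z : 'M[R]_p) : psd Y -> psd Z -> psd (Y + Z).
Proof.
case=> Ys hY [Zs hZ]; split; first by rewrite linearD /= Ys Zs.
by move=> v; rewrite mulmxDr mulmxDl mxE addr_ge0.
Qed.

Lemma psd_scal p (c : R) : 0 <= c -> psd (c%:M : 'M[R]_p).
Proof.
move=> c0; split; first by rewrite tr_scalar_mx.
move=> v; rewrite mul_mx_scalar -scalemxAl mxE mulr_ge0 //; exact: tmm_ge0.
Qed.

Lemma psdZ p (c : R) (Y : 'M[R]_p) : 0 <= c -> psd Y -> psd (c *: Y).
Proof.
move=> c0 [Ys h]; split; first by rewrite linearZ /= Ys.
by move=> v; rewrite -scalemxAr -scalemxAl mxE mulr_ge0.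
Qed.

Lemma pd_add_psd p (Y Z : 'M[R]_p) : pd Y -> psd Z -> pd (Y + Z).
Proof.
case=> Ys hY [Zs hZ]; split; first by rewrite linearD /= Ys Zs.
move=> v v0; rewrite mulmxDr mulmxDl mxE; apply: (lt_le_trans (hY v v0)); by rewrite lerDl.
Qed.

Lemma pdZ p (c : R) (Y : 'M[R]_p) : 0 < c -> pd Y -> pd (c *: Y).
Proof.
move=> c0 [Ys h]; split; first by rewrite linearZ /= Ys.
by move=> v v0; rewrite -scalemxAr -scalemxAl mxE mulr_gt0 // h.
Qed.

Lemma pd_unit p (S : 'M[R]_p) : pd S -> S \in unitmx.
Proof.
case=> Ss h; rewrite unitmxE unitfE; apply/negP => /det0P [u un0 hu].
have ut0 : u^T != 0 by rewrite -trmx0 (inj_eq (@trmx_inj _ _ _)).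
by have := h u^T ut0; rewrite trmxK hu mul0mx mxE ltxx.
Qed.

Lemma pd_inv p (S : 'M[R]_p) : pd S -> pd (invmx S).
Proof.
move=> hS; have Su := pd_unit hS; case: hS => Ss h; split; first by rewrite trmx_inv Ss.
move=> v v0; set w := invmx S *m v.
have wn0 : w != 0.
  by apply: contraNneq v0 => w0; rewrite -(mulKVmx Su v) -/w w0 mulmx0.
have := h w wn0; rewrite /w trmx_mul trmx_inv Ss -!mulmxA (mulKVmx Su).
by rewrite mulmxA.
Qed.

Lemma unit_1pXCX p (X C : 'M[R]_p) : X^T = X -> psd C ->
  1%:M + X *m C *m X \in unitmx.
Proof.
move=> Xs hC; rewrite unitmxE unitfE; apply/negP => /det0P [u un0].
rewrite mulmxDr mulmx1 => /eqP; rewrite addr_eq0 => /eqP hu.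
pose y := u *m X.
have e : (u *m u^T) 0 0 = - (y *m C *m y^T) 0 0.
  rewrite {1}hu mulNmx mxE /y trmx_mul Xs !mulmxA //.
have h1 := mtm_ge0 u; have h2 := psd_row hC y.
have : (u *m u^T) 0 0 = 0 by apply/eqP; rewrite eq_le h1 andbT e oppr_le0.
by move/mtm_eq0; apply/eqP.
Qed.

Lemma unit_1pXXC p (X C : 'M[R]_p) : X^T = X -> psd C ->
  1%:M + X *m X *m C \in unitmx.
Proof.
move=> Xs hC; have Cs := hC.1; rewrite unitmxE unitfE; apply/negP => /det0P [u un0].
rewrite mulmxDr mulmx1 => /eqP; rewrite addr_eq0 => /eqP hu.
pose y := u *m X *m X.
have e : ((u *m X) *m (u *m X)^T) 0 0 = - (y *m C *m y^T) 0 0.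
  rewrite trmx_mul Xs mulmxA -/y; rewrite [in u^T]hu linearN /=.
  have oppE (Z : 'M[R]_1) : (- Z) 0 0 = - Z 0 0 by rewrite mxE.
  rewrite mulmxN oppE; congr (- _).
  by rewrite /y !trmx_mul Cs Xs !mulmxA.
have h1 := mtm_ge0 (u *m X); have h2 := psd_row hC y.
have : ((u *m X) *m (u *m X)^T) 0 0 = 0 by apply/eqP; rewrite eq_le h1 andbT e oppr_le0.
move/mtm_eq0 => uX0; have e2 : u *m (X *m X *m C) = (u *m X) *m (X *m C) by rewrite !mulmxA.
move: hu; rewrite e2 uX0 !mul0mx oppr0 => u0.
by rewrite u0 eqxx in un0.
Qed.

Lemma sqrt_identity p (X C : 'M[R]_p) : X^T = X -> psd C ->
  X *m invmx (1%:M + X *m C *m X) *m X = invmx (1%:M + X *m X *m C) *m (X *m X).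
Proof.
move=> Xs hC; have u1 := unit_1pXCX Xs hC; have u2 := unit_1pXXC Xs hC.
have E : (1%:M + X *m X *m C) *m X = X *m (1%:M + X *m C *m X).
  by rewrite mulmxDl mulmxDr mul1mx mulmx1 !mulmxA.
have E2 : X *m invmx (1%:M + X *m C *m X) = invmx (1%:M + X *m X *m C) *m X.
  apply: (canRL (mulKmx u2)); rewrite mulmxA E.
  by rewrite mulmxK.
by rewrite E2 mulmxA.
Qed.


Lemma core_psd n m (eps : R) (B : 'M[R]_(n, m)) (Rk : 'M[R]_m) (P : 'M[R]_n)
  (S : 'M[R]_m) : 0 < eps -> psd P -> psd Rk -> S^T = S ->
  psd (P - eps^-1 *: (P *m (B *m S) *m invmx (1%:M + S *m (eps^-1 *: (Rk + B^T *m P *m B)) *m S)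
        *m (B *m S)^T *m P)).
Proof.
move=> e0 hP hR Ss; have Ps := hP.1; have Rs := hR.1.
set c := eps^-1; set G := B *m S; set C := c *: (Rk + _); set N := (1%:M + S *m C *m S).
have hC : psd C.
  apply: psdZ; first by rewrite invr_ge0 ltW.
  by apply: psdD => //; apply: psd_congr.
have Nu : N \in unitmx by apply: unit_1pXCX.
set K := invmx N.
have Ns : N^T = N.
  by rewrite /N linearD /= tr_scalar_mx !trmx_mul Ss hC.1 mulmxA.
have Ks : K^T = K by rewrite /K trmx_inv Ns.
set X := P *m G *m K.
have XT : X^T = K *m G^T *m P by rewrite /X !trmx_mul Ks Ps mulmxA.
have XN : X *m N = P *m G by rewrite /X -mulmxA mulVmx // mulmx1.
set W := S *m Rk *m S.
have epsN : eps *: N = G^T *m P *m G + (W + eps%:M).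
  rewrite /N /C scalerDr scalemxAl scalemxAr scalerA mulfV ?gt_eqF // scale1r.
  rewrite -scalemx1 scale_scalar_mx mulr1 mulmxDr mulmxDl /G /W trmx_mul Ss.
  rewrite scalemx1 addrCA [RHS]addrCA; congr (_ + _); by rewrite addrC !mulmxA.
set Q := c *: X^T.
have -> : P - c *: (X *m G^T *m P)
   = (1%:M - G *m Q)^T *m P *m (1%:M - G *m Q) + Q^T *m (W + eps%:M) *m Q.
  have QT : Q^T = c *: X by rewrite /Q linearZ /= trmxK.
  have E1 : (1%:M - G *m Q)^T *m P *m (1%:M - G *m Q) = P - c *: (P *m G *m X^T)
     - c *: (X *m G^T *m P) + (c * c) *: (X *m (G^T *m P *m G) *m X^T).
    rewrite [(1%:M - _)^T]linearB /= tr_scalar_mx trmx_mul QT /Q.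
    rewrite !(mulmxBl, mulmxBr, mul1mx, mulmx1).
    rewrite -!scalemxAl -!scalemxAr !scalerA !mulmxA.
    rewrite opprB addrA.
    set b := c *: (X *m G^T *m P); set d := c *: (P *m B *m S *m X^T); set e := (c * c) *: _.
    by rewrite addrAC (addrAC P).
  rewrite E1 QT /Q.
  rewrite -scalemxAr -!scalemxAl scalerA -addrA -scalerDr -mulmxDl -mulmxDr.
  rewrite -epsN -scalemxAr -scalemxAl scalerA XN.
  have -> : c * c * eps = c by rewrite -mulrA mulVf ?gt_eqF // mulr1.
  by rewrite addrAC subrK.
apply: psdD; first exact: psd_congr.
apply: psd_congr; apply: psdD; last by apply: psd_scal; rewrite ltW.
by rewrite /W -{1}Ss; apply: psd_congr.
Qed.
End Alg.

Section Eq.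
Variable R : realType.



Lemma psd_sqrt_ex' p (S : 'M[R]_p) : psd S -> exists X, psd X /\ X *m X = S.
Proof.
case: p S => [|p] S hS; last exact: psd_sqrt_ex.
exists 0; split; first exact: psd0.
by apply/matrixP => -[].
Qed.

Lemma sqrtmP p (S : 'M[R]_p) : psd S -> psd (sqrtm S) /\ sqrtm S *m sqrtm S = S.
Proof.
move=> hS; rewrite /sqrtm; apply: (xgetPex 0 (P := [set X | psd X /\ X *m X = S])).
exact: psd_sqrt_ex'.
Qed.

Lemma congr_sub p q (A0 : 'M[R]_(p, q)) (P Z : 'M[R]_p) (c : R) :
  A0^T *m (P - c *: Z) *m A0 = A0^T *m P *m A0 - c *: (A0^T *m Z *m A0).
Proof. by rewrite mulmxBr mulmxBl -scalemxAr -scalemxAl. Qed.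

Lemma pd_det_gt0 p (S : 'M[R]_p) : pd S -> 0 < \det S.
Proof.
move=> hS; have [_ SS] := sqrtmP (pd_psd hS).
have u := pd_unit hS; rewrite unitmxE unitfE in u.
by rewrite lt_def u /= -SS det_mulmx -expr2 sqr_ge0.
Qed.

Variables (n m T : nat) (eps : R).
Variables (A : 'I_T -> 'M[R]_n) (B : 'I_T -> 'M[R]_(n, m))
          (Rk : 'I_T -> 'M[R]_m) (F : 'M[R]_n).
Variable Srho : 'I_T -> 'M[R]_m.

Local Notation A_ := (at_nat A 0).
Local Notation B_ := (at_nat B 0).
Local Notation R_ := (at_nat Rk 0).
Local Notation Sr_ := (at_nat Srho 0).

Definition Pi_step2 (k : nat) (P : 'M[R]_n) : 'M[R]_n :=
  (A_ k)^T *m P *m A_ k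
  - eps^-1 *: ((A_ k)^T *m P *m B_ k
      *m (invmx (1%:M + Sr_ k *m Cmat eps B Rk k P) *m Sr_ k)
      *m (B_ k)^T *m P *m A_ k).

Fixpoint Pi_rev2 (j : nat) : 'M[R]_n :=
  match j with
  | 0 => F
  | j'.+1 => Pi_step2 (T - j'.+1) (Pi_rev2 j')
  end.

Definition Pi2 (k : nat) : 'M[R]_n := Pi_rev2 (T - k).

Hypothesis eps0 : 0 < eps.
Hypothesis Rpd : forall k, pd (Rk k).

Lemma R_psd k : psd (R_ k).
Proof.
rewrite /at_nat; case: insubP => [k' _ _ /=|_ /=]; last exact: psd0.
exact: pd_psd.
Qed.

Lemma Cmat_psd k P : psd P -> psd (Cmat eps B Rk k P).
Proof.
move=> hP; apply: psdZ; first by rewrite invr_ge0 ltW.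
by apply: psdD; [exact: R_psd | apply: psd_congr].
Qed.

Lemma R_pd (k : nat) : (k < T)%N -> pd (R_ k).
Proof. by move=> kT; rewrite /at_nat insubT /=. Qed.

Lemma step_eq_psd k P : psd (Sr_ k) -> psd P ->
  Pi_step eps A B Rk Srho k P = Pi_step2 k P /\ psd (Pi_step eps A B Rk Srho k P).
Proof.
move=> hS hP; have [Sp SS] := sqrtmP hS.
rewrite /Pi_step /Pi_step2; set S := sqrtm _.
have hC : psd (Cmat eps B Rk k P).
  apply: psdZ; first by rewrite invr_ge0 ltW.
  by apply: psdD; [exact: R_psd | apply: psd_congr].
split.
  congr (_ - _ *: _).
  have e Z : (A_ k)^T *m P *m B_ k *m S *m invmx (1%:M + S *m Cmat eps B Rk k P *m S)
      *m S *m Z = (A_ k)^T *m P *m B_ k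
      *m (S *m invmx (1%:M + S *m Cmat eps B Rk k P *m S) *m S) *m Z.
    by rewrite !mulmxA.
  by rewrite !e sqrt_identity ?Sp.1 // SS.
have -> : (A_ k)^T *m P *m A_ k - eps^-1 *: ((A_ k)^T *m P *m B_ k *m S *m
    invmx (1%:M + S *m Cmat eps B Rk k P *m S) *m S *m (B_ k)^T *m P *m A_ k)
  = (A_ k)^T *m (P - eps^-1 *: (P *m (B_ k *m S) *m invmx (1%:M + S *m
      (eps^-1 *: (R_ k + (B_ k)^T *m P *m B_ k)) *m S) *m (B_ k *m S)^T *m P)) *m A_ k.
  rewrite congr_sub; congr (_ - _ *: _); rewrite trmx_mul Sp.1 !mulmxA //.
apply: psd_congr; apply: core_psd => //; [exact: R_psd | exact: Sp.1].
Qed.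

Hypothesis Spsd : forall k : 'I_T, psd (Srho k).
Hypothesis Fpsd : psd F.

Lemma Sr_psd k : psd (Sr_ k).
Proof.
rewrite /at_nat; case: insubP => [k' _ _ /=|_ /=]; last exact: psd0.
exact: Spsd.
Qed.

Lemma Pi_rev_eq j : Pi_rev eps A B Rk F Srho j = Pi_rev2 j /\ psd (Pi_rev2 j).
Proof.
elim: j => [|j [IH1 IH2]] /=; first by [].
have [e1 e2] := step_eq_psd (Sr_psd (T - j.+1)%N) IH2.
by rewrite IH1 e1; split => //; rewrite -e1.
Qed.

Variables (Sw : 'I_T -> 'M[R]_n) (Sx : 'M[R]_n).
Local Notation W_ := (at_nat Sw 0).

Definition SigmaQ2 (k : nat) : 'M[R]_m :=
  eps *: invmx (R_ k + (B_ k)^T *m Pi2 k.+1 *m B_ k).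

Definition J2 : R :=
  2^-1 * (\tr (Pi2 0 *m Sx)
          + \sum_(k < T) (eps * ln (\det (Sr_ k + SigmaQ2 k) / \det (SigmaQ2 k))
                          + \tr (Pi2 k.+1 *m W_ k))).

Lemma J_eq : Jcheck_val eps A B Rk Sw F Sx Srho = J2.
Proof.
have E j : Pi_rev eps A B Rk F Srho j = Pi_rev2 j by case: (Pi_rev_eq j).
rewrite /Jcheck_val /J2 /SigmaQ /SigmaQ2 /Pi /Pi2 E; congr (_ * (_ + _)).
by apply: eq_bigr => k _; rewrite !E.
Qed.
End Eq.

Import numFieldNormedType.Exports.
Local Open Scope classical_set_scope.
Local Open Scope ring_scope.

Section Cont.
Variable R : realType.
Variable X : topologicalType.
Variable x0 : X.

Definition rc (f : X -> R) := f x @[x --> x0] --> f x0.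
Definition mc p q (F : X -> 'M[R]_(p, q)) := forall i j, rc (fun x => F x i j).

Lemma rc_ext f g : (forall x, f x = g x) -> rc g -> rc f.
Proof. by move=> e; have -> : f = g by apply/funext. Qed.

Lemma rc_near f g : (\forall x \near x0, f x = g x) -> rc g -> rc f.
Proof.
move=> e hg; have fg : f x0 = g x0 := nbhs_singleton e.
rewrite /rc fg; apply: cvg_trans hg; apply: near_eq_cvg; by apply: filterS e => x ->.
Qed.

Lemma rc_cst c : rc (fun _ => c).
Proof. exact: cvg_cst. Qed.

Lemma rc_add f g : rc f -> rc g -> rc (fun x => f x + g x).
Proof. move=> hf hg; exact: cvgD. Qed.

Lemma rc_opp f : rc f -> rc (fun x => - f x).
Proof. move=> hf; exact: cvgN. Qed.

Lemma rc_mul f g : rc f -> rc g -> rc (fun x => f x * g x).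
Proof. move=> hf hg; exact: cvgM. Qed.

Lemma rc_inv f : f x0 != 0 -> rc f -> rc (fun x => (f x)^-1).
Proof. move=> h hf; exact: cvgV. Qed.

Lemma rc_ln f : 0 < f x0 -> rc f -> rc (fun x => ln (f x)).
Proof.
move=> h hf; apply: (continuous_comp (f := f) (g := @ln R)) => //.
exact: continuous_ln.
Qed.

Lemma rc_sum (I : Type) (r : seq I) (P : pred I) (f : I -> X -> R) :
  (forall i, rc (f i)) -> rc (fun x => \sum_(i <- r | P i) f i x).
Proof.
move=> hf; elim: r => [|i r IH].
  by apply: (rc_ext (g := fun=> 0)); [move=> x; rewrite big_nil | exact: rc_cst].
case: (boolP (P i)) => Pi.
  by apply: (rc_ext (g := fun x => f i x + \sum_(j <- r | P j) f j x));
    [move=> x; rewrite big_cons Pi | apply: rc_add].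
by apply: (rc_ext (g := fun x => \sum_(j <- r | P j) f j x)) => // x; rewrite big_cons (negbTE Pi).
Qed.

Lemma rc_prod (I : Type) (r : seq I) (P : pred I) (f : I -> X -> R) :
  (forall i, rc (f i)) -> rc (fun x => \prod_(i <- r | P i) f i x).
Proof.
move=> hf; elim: r => [|i r IH].
  by apply: (rc_ext (g := fun=> 1)); [move=> x; rewrite big_nil | exact: rc_cst].
case: (boolP (P i)) => Pi.
  by apply: (rc_ext (g := fun x => f i x * \prod_(j <- r | P j) f j x));
    [move=> x; rewrite big_cons Pi | apply: rc_mul].
by apply: (rc_ext (g := fun x => \prod_(j <- r | P j) f j x)) => // x; rewrite big_cons (negbTE Pi).
Qed.

Lemma mc_cst p q (M : 'M[R]_(p, q)) : mc (fun _ => M).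
Proof. move=> i j; exact: rc_cst. Qed.

Lemma mc_add p q (F G : X -> 'M[R]_(p, q)) : mc F -> mc G -> mc (fun x => F x + G x).
Proof.
move=> hF hG i j; apply: (rc_ext (g := fun x => F x i j + G x i j)) => [x|]; first by rewrite mxE.
exact: rc_add.
Qed.

Lemma mc_opp p q (F : X -> 'M[R]_(p, q)) : mc F -> mc (fun x => - F x).
Proof.
move=> hF i j; apply: (rc_ext (g := fun x => - F x i j)) => [x|]; first by rewrite mxE.
exact: rc_opp.
Qed.

Lemma mc_sub p q (F G : X -> 'M[R]_(p, q)) : mc F -> mc G -> mc (fun x => F x - G x).
Proof. by move=> hF hG; apply: mc_add => //; apply: mc_opp. Qed.

Lemma mc_scale p q (f : X -> R) (F : X -> 'M[R]_(p, q)) : rc f -> mc F ->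
  mc (fun x => f x *: F x).
Proof.
move=> hf hF i j; apply: (rc_ext (g := fun x => f x * F x i j)) => [x|]; first by rewrite mxE.
exact: rc_mul.
Qed.

Lemma mc_mul p q r (F : X -> 'M[R]_(p, q)) (G : X -> 'M[R]_(q, r)) : mc F -> mc G ->
  mc (fun x => F x *m G x).
Proof.
move=> hF hG i j; apply: (rc_ext (g := fun x => \sum_k F x i k * G x k j)) => [x|].
  by rewrite mxE.
by apply: rc_sum => k; apply: rc_mul.
Qed.

Lemma mc_tr p q (F : X -> 'M[R]_(p, q)) : mc F -> mc (fun x => (F x)^T).
Proof.
move=> hF i j; apply: (rc_ext (g := fun x => F x j i)) => [x|]; first by rewrite mxE.
exact: hF.
Qed.

Lemma rc_det p (F : X -> 'M[R]_p) : mc F -> rc (fun x => \det (F x)).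
Proof.
move=> hF; apply: (rc_ext (g := fun x => \sum_(s : 'S_p) (-1) ^+ s * \prod_i F x i (s i))) => [x //|].
apply: rc_sum => s; apply: rc_mul; [apply: rc_cst | apply: rc_prod => i; apply: hF].
Qed.

Lemma rc_trace p (F : X -> 'M[R]_p) : mc F -> rc (fun x => \tr (F x)).
Proof. by move=> hF; apply: rc_sum => i; apply: hF. Qed.

Lemma mc_adj p (F : X -> 'M[R]_p) : mc F -> mc (fun x => \adj (F x)).
Proof.
move=> hF i j; apply: (rc_ext (g := fun x => cofactor (F x) j i)) => [x|]; first by rewrite mxE.
apply: rc_mul; first exact: rc_cst.
apply: rc_det => k l.
apply: (rc_ext (g := fun x => F x (lift j k) (lift i l))) => [x|]; first by rewrite !mxE.
exact: hF.
Qed.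

Lemma mc_inv p (F : X -> 'M[R]_p) : mc F -> F x0 \in unitmx -> mc (fun x => invmx (F x)).
Proof.
move=> hF u0.
have hd := rc_det hF.
have d0 : \det (F x0) != 0 by rewrite -unitfE -unitmxE.
have nz : \forall x \near x0, \det (F x) != 0 := cvgr_neq0 _ hd d0.
move=> i j; apply: (rc_near (g := fun x => ((\det (F x))^-1 *: \adj (F x)) i j)).
  near=> x; rewrite /invmx ifT // unitmxE unitfE; near: x; exact: nz.
apply: mc_scale; [exact: rc_inv | exact: mc_adj].
Unshelve. all: by end_near.
Qed.

End Cont.

Section Main.
Variable R : realType.
Variables (n m T : nat) (eps : R).
Variables (A : 'I_T -> 'M[R]_n) (B : 'I_T -> 'M[R]_(n, m))
          (Rk : 'I_T -> 'M[R]_m) (Sw : 'I_T -> 'M[R]_n) (F Sx : 'M[R]_n).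
Hypothesis eps0 : 0 < eps.
Hypothesis Rpd : forall k, pd (Rk k).
Hypothesis Fpsd : psd F.
Hypothesis T0 : (0 < T)%N.

Local Notation X := {ptws 'I_T -> 'M[R]_m}.
Variable x0 : X.
Hypothesis hx0 : forall k, psd (x0 k).

Lemma mc_proj k : mc x0 (fun x : X => at_nat x 0 k).
Proof.
rewrite /at_nat; case: insubP => [k' _ _ /=|_ /=]; last exact: mc_cst.
move=> i j; rewrite /rc.
apply: (continuous_comp (f := fun x : X => x k') (g := fun M : 'M[R]_m => M i j)).
  exact: proj_continuous.
exact: coord_continuous.
Qed.

Ltac mcs := repeat match goal with
 | |- mc _ (fun _ => ?c) => apply: mc_cst
 | |- mc _ (fun _ => @mulmx _ ?p ?q ?r _ _) => apply: (@mc_mul _ _ _ p q r)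
 | |- mc _ (fun _ => @trmx _ ?p ?q _) => apply: (@mc_tr _ _ _ p q)
 | |- @mc _ _ _ ?p ?q (fun _ => _ - _) => apply: (@mc_sub _ _ _ p q)
 | |- @mc _ _ _ ?p ?q (fun _ => _ + _) => apply: (@mc_add _ _ _ p q)
 | |- @mc _ _ _ ?p ?q (fun _ => ?c *: _) => apply: (@mc_scale _ _ _ p q (fun=> c)); first exact: rc_cst
 | |- mc _ (fun x => at_nat x 0 _) => apply: mc_proj
 | H : mc ?x0 ?f |- mc ?x0 ?f => exact: H
 | |- mc _ (fun _ => Cmat _ _ _ _ _) => rewrite /Cmat
end.

Lemma Pi_rev2_mc j : mc x0 (fun x : X => Pi_rev2 eps A B Rk F x j).
Proof.
elim: j => [|j IH] /=; first exact: mc_cst.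
have [_ P0] := Pi_rev_eq A B eps0 Rpd hx0 Fpsd j.
rewrite /Pi_step2.
mcs; apply: mc_inv; first by mcs.
have [Sp SS] := sqrtmP (Sr_psd hx0 (T - j.+1)%N).
rewrite -SS; apply: unit_1pXXC; first exact: Sp.1.
exact: Cmat_psd.
Qed.

Lemma N_pd (k : 'I_T) :
  pd (at_nat Rk 0 k + (at_nat B 0 k)^T *m Pi2 eps A B Rk F x0 k.+1 *m at_nat B 0 k).
Proof.
apply: pd_add_psd; first exact: R_pd.
apply: psd_congr; rewrite /Pi2; have [_ h] := Pi_rev_eq A B eps0 Rpd hx0 Fpsd (T - k.+1)%N.
exact: h.
Qed.

Lemma SQ_pd (k : 'I_T) : pd (SigmaQ2 eps A B Rk F x0 k).
Proof. by apply: pdZ => //; apply: pd_inv; apply: N_pd. Qed.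

Lemma SQ_mc (k : 'I_T) : mc x0 (fun x : X => SigmaQ2 eps A B Rk F x k).
Proof.
rewrite /SigmaQ2; apply: (@mc_scale _ _ _ m m (fun=> eps)); first exact: rc_cst.
apply: mc_inv; last exact: (pd_unit (N_pd k)).
mcs; rewrite /Pi2; exact: Pi_rev2_mc.
Qed.

Lemma J2_rc : rc x0 (fun x : X => J2 eps A B Rk F x Sw Sx).
Proof.
rewrite /J2; apply: rc_mul; first exact: rc_cst.
apply: rc_add.
  apply: rc_trace; mcs; rewrite /Pi2; exact: Pi_rev2_mc.
apply: rc_sum => k; apply: rc_add; last first.
  apply: rc_trace; mcs; rewrite /Pi2; exact: Pi_rev2_mc.
apply: rc_mul; first exact: rc_cst.
have hSQ := SQ_mc (k:=k).
have d2 := pd_det_gt0 (SQ_pd k).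
have d1 : 0 < \det (at_nat x0 0 k + SigmaQ2 eps A B Rk F x0 k).
  by apply: pd_det_gt0; rewrite addrC; apply: pd_add_psd; [exact: SQ_pd | exact: Sr_psd].
apply: rc_ln; first by rewrite divr_gt0.
apply: rc_mul; first by apply: rc_det; mcs.
apply: rc_inv; first by rewrite gt_eqF.
exact: rc_det.
Qed.
End Main.

Theorem lemma3 (R : realType) (n m T : nat) (eps : R)
  (A : 'I_T -> 'M[R]_n) (B : 'I_T -> 'M[R]_(n, m))
  (Rk : 'I_T -> 'M[R]_m) (Sw : 'I_T -> 'M[R]_n) (F Sx : 'M[R]_n) :
  (1 <= n)%N -> (1 <= m)%N -> (1 <= T)%N -> 0 < eps ->
  (forall k, pd (Rk k)) -> (forall k, pd (Sw k)) -> pd F -> pd Sx ->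
  {within @MT R T m, continuous (Jcheck eps A B Rk Sw F Sx)}.
Proof.
move=> hn hm hT e0 hR hW hF hSx.
rewrite continuous_subspace_in => x0 hx0.
have hx : forall k, psd (x0 k) by move: hx0; rewrite in_setE.
have hx' : MT x0 by move: hx0; rewrite in_setE.
have hg := J2_rc (A:=A) (B:=B) (Sw:=Sw) (Sx:=Sx) e0 hR (pd_psd hF) hx.
have H := continuous_subspaceT_for hx' hg.
rewrite /continuous_at.
have E0 : Jcheck eps A B Rk Sw F Sx x0 = J2 eps A B Rk F x0 Sw Sx.
  exact: (J_eq A B e0 hR hx (pd_psd hF) Sw Sx).
rewrite /from_subspace E0; apply: cvg_trans H; apply: near_eq_cvg.
rewrite -(nbhs_subspace_in hx').
have W := @near_withinT _ (nbhs x0) (@MT R T m) (nbhs_filter x0).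
near=> x.
have Mx : MT x by near: x; exact: W.
have hxk : forall k, psd (x k) := Mx.
exact: (esym (J_eq A B e0 hR hxk (pd_psd hF) Sw Sx)).
Unshelve. all: by end_near.
Qed.
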